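(* Let $d\ge3$, $n\ge1$ and $0\le c<\frac1{d(d-1)}$. For $\epsilon\ge0$ with $c+\epsilon\le\frac1{d(d-1)}$ let $$\rho(c,\epsilon)=\Big(\frac1{2d}-\frac{d-1}2(c+\epsilon)\Big)\sum_{i=0}^{d-1}|ii\rangle\langle ii|+\Big(\frac1{d(d-1)}+\epsilon\Big)\sum_{i<j}|\psi^-_{ij}\rangle\langle\psi^-_{ij}|+c\sum_{i<j}|\psi^+_{ij}\rangle\langle\psi^+_{ij}|.$$ Then there exists $\epsilon_0=\epsilon_0(c,n)>0$ such that for all $0\le\epsilon\le\epsilon_0$, $\rho(c,\epsilon)$ is pseudo $n$-copy undistillable, i.e. $\langle\psi|(\rho(c,\epsilon)^{PT})^{\otimes n}|\psi\rangle\ge0$ for every $|\psi\rangle\in(\mathbb{C}^d)^{\otimes n}_A\otimes(\mathbb{C}^d)^{\otimes n}_B$ of Schmidt rank two.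
   Context: $|\psi^{\pm}_{ij}\rangle=\frac1{\sqrt2}(|ij\rangle\pm|ji\rangle)$, sums over $0\le i<j\le d-1$. $\rho^{PT}$ is the partial transpose on the second factor of $\mathbb{C}^d\otimes\mathbb{C}^d$. The space $(\mathbb{C}^d\otimes\mathbb{C}^d)^{\otimes n}$ is regarded as bipartite with the first factor of each copy belonging to $A$; Schmidt rank is with respect to this bipartition. *)

(* Defs.v *)
From HB Require Import structures.
From mathcomp Require Import all_boot all_order all_algebra.
From mathcomp Require Export complex.
Set Implicit Arguments. Unset Strict Implicit. Unset Printing Implicit Defensive.
Import Order.TTheory GRing.Theory Num.Theory.
Local Open Scope ring_scope.

Section Defs.
Variable (R : rcfType) (d : nat).
Local Notation C := R[i].

Definition rC (x : R) : C := Complex x 0.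

(* basis index of C^d (x) C^d : pairs (first factor, second factor) *)
Definition pidx := ('I_d * 'I_d)%type.

Definition vec2 := pidx -> C.
Definition op2 := pidx -> pidx -> C.

Definition ket (i j : 'I_d) : vec2 := fun x => ((x == (i, j)) : bool)%:R.

Definition psiP (i j : 'I_d) : vec2 := fun x => (ket i j x + ket j i x) / sqrtC 2.
Definition psiM (i j : 'I_d) : vec2 := fun x => (ket i j x - ket j i x) / sqrtC 2.

Definition proj (v : vec2) : op2 := fun x y => v x * (v y)^*.

Definition rho (c eps : R) : op2 := fun x y =>
  (rC (1 / (2 * d%:R) - (d%:R - 1) / 2 * (c + eps))
     * \sum_(i < d) proj (ket i i) x y)
  + (rC (1 / (d%:R * (d%:R - 1)) + eps)
     * \sum_(i < d) \sum_(j < d | (i < j)%N) proj (psiM i j) x y)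
  + (rC c * \sum_(i < d) \sum_(j < d | (i < j)%N) proj (psiP i j) x y).

Definition ptrans (X : op2) : op2 := fun x y => X (x.1, y.2) (y.1, x.2).

(* index of (C^d (x) C^d)^{(x) n} split as A-part and B-part:
   a : 'I_n -> 'I_d gives the first factors of each copy, b the second ones *)
Definition tidx (n : nat) := {ffun 'I_n -> 'I_d}.

(* matrix entries of X^{(x) n}, with the k-th copy having row (a k, b k)
   and column (a' k, b' k) *)
Definition tensor_pow (n : nat) (X : op2) (a b a' b' : tidx n) : C :=
  \prod_(k < n) X (a k, b k) (a' k, b' k).

(* a vector psi in (C^d)^{(x)n}_A (x) (C^d)^{(x)n}_B, given by coefficients
   psi a b; <psi| X^{(x)n} |psi> *)
Definition expval (n : nat) (X : op2) (psi : tidx n -> tidx n -> C) : C :=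
  \sum_(a : tidx n) \sum_(b : tidx n) \sum_(a' : tidx n) \sum_(b' : tidx n)
    (psi a b)^* * tensor_pow X a b a' b' * psi a' b'.

(* Schmidt rank w.r.t. the A|B bipartition = rank of the coefficient matrix *)
Definition schmidt_rank (n : nat) (psi : tidx n -> tidx n -> C) : nat :=
  \rank (\matrix_(i < #|tidx n|, j < #|tidx n|) psi (enum_val i) (enum_val j)).

End Defs.

Arguments rho {R} d c eps _ _.

(* Main.v *)
Require Import Defs.
From HB Require Import structures.
From mathcomp Require Import all_boot all_order all_algebra.
From mathcomp Require Import complex.
From mathcomp Require Import ring lra.
Import Order.TTheory GRing.Theory Num.Theory.
Local Open Scope ring_scope.

Section P2.
Variable (R : rcfType) (d : nat).
Local Notation C := R[i].
Definition dl (i j : 'I_d) : R := (i == j)%:R.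

Ltac dsolve := rewrite /dl; repeat match goal with p : pidx _ |- _ => case: p => ? ? end; rewrite /=; repeat (match goal with
 | H : ?a <> ?a |- _ => exfalso; exact (H erefl)
 | |- context[(?a == ?b)] => case: (@eqP _ a b) => [?|?]; subst
 end); rewrite /=; ring.

Lemma sum_dl (a : 'I_d) (F : 'I_d -> R) : \sum_i dl a i * F i = F a.
Proof.
rewrite (bigD1 a) //= /dl eqxx mul1r big1 ?addr0 // => i /negbTE.
by rewrite eq_sym => ->; rewrite mul0r.
Qed.

Lemma sum_lt_sym (F : 'I_d -> 'I_d -> R) : (forall i j : 'I_d, F i j = F j i) ->
  (\sum_(i : 'I_d) \sum_(j : 'I_d | (i < j)%N) F i j) *+ 2 = \sum_i \sum_j F i j - \sum_i F i i.
Proof.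
move=> Fs.
have E1 : \sum_i \sum_j F i j = \sum_(i : 'I_d) \sum_(j : 'I_d | (i < j)%N) F i j
   + \sum_(i : 'I_d) \sum_(j : 'I_d | (j < i)%N) F i j + \sum_i F i i.
  rewrite -!big_split /=; apply: eq_bigr => i _.
  rewrite (bigID (fun j : 'I_d => (i < j)%N)) /= -addrA; congr (_ + _).
  rewrite (bigID (fun j : 'I_d => (j < i)%N)) /=; congr (_ + _).
    by apply: eq_bigl => j; case: ltngtP.
  rewrite (big_pred1 i) // => j /=; rewrite -leqNgt -leqNgt.
  by rewrite -eqn_leq.
have E2 : \sum_(i : 'I_d) \sum_(j : 'I_d | (j < i)%N) F i j = \sum_(i : 'I_d) \sum_(j : 'I_d | (i < j)%N) F i j.
  under eq_bigr do rewrite big_mkcond.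
  rewrite exchange_big /=; apply: eq_bigr => i _; rewrite big_mkcond.
  by rewrite [RHS]big_mkcond; apply: eq_bigr => j _; rewrite Fs.
by rewrite E1 E2 mulr2n addrK.
Qed.


Definition E (x : pidx d) (i j : 'I_d) : R := dl x.1 i * dl x.2 j.
Definition Idf (x y : pidx d) := dl x.1 y.1 * dl x.2 y.2.
Definition Dgf (x y : pidx d) := dl x.1 y.1 * dl x.2 y.2 * dl x.1 x.2.
Definition Uf (x y : pidx d) := dl x.1 x.2 * dl y.1 y.2.
Definition Swf (x y : pidx d) := dl x.1 y.2 * dl x.2 y.1.

Lemma B1 x y : \sum_i \sum_j E x i j * E y i j = Idf x y.
Proof.
rewrite (eq_bigr (fun i => dl x.1 i * (dl y.1 i * \sum_j dl x.2 j * dl y.2 j))); last first.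
  by move=> i _; rewrite !mulr_sumr; apply: eq_bigr => j _; rewrite /E; ring.
rewrite sum_dl sum_dl /Idf; dsolve.
Qed.

Lemma B2 x y : \sum_i \sum_j E x i j * E y j i = Swf x y.
Proof.
rewrite (eq_bigr (fun i => dl x.1 i * (dl y.2 i * \sum_j dl x.2 j * dl y.1 j))); last first.
  by move=> i _; rewrite !mulr_sumr; apply: eq_bigr => j _; rewrite /E; ring.
rewrite sum_dl sum_dl /Swf; dsolve.
Qed.

Lemma B3 x y : \sum_i \sum_j E x i i * E y j j = Uf x y.
Proof.
rewrite (eq_bigr (fun i => dl x.1 i * (dl x.2 i * \sum_j dl y.1 j * dl y.2 j))); last first.
  by move=> i _; rewrite !mulr_sumr; apply: eq_bigr => j _; rewrite /E; ring.
rewrite sum_dl sum_dl /Uf; dsolve.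
Qed.

Lemma B4 x y : \sum_i E x i i * E y i i = Dgf x y.
Proof.
rewrite (eq_bigr (fun i => dl x.1 i * (dl x.2 i * dl y.1 i * dl y.2 i))); last first.
  by move=> i _; rewrite /E; ring.
rewrite sum_dl /Dgf; dsolve.
Qed.

Lemma sum_const_d (a : R) : \sum_(i < d) a = d%:R * a.
Proof. by rewrite sumr_const card_ord mulr_natl. Qed.

Lemma B5 x y : \sum_i \sum_(j < d) E x i i * E y i i = d%:R * Dgf x y.
Proof. by rewrite -B4 mulr_sumr; apply: eq_bigr => i _; rewrite sum_const_d. Qed.

Lemma B5' x y : \sum_(i < d) \sum_j E x j j * E y j j = d%:R * Dgf x y.
Proof. by rewrite exchange_big /= B5. Qed.

Lemma B1' x y : \sum_i \sum_j E x j i * E y j i = Idf x y.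
Proof. by rewrite exchange_big /= B1. Qed.
Lemma B2' x y : \sum_i \sum_j E x j i * E y i j = Swf x y.
Proof. by rewrite exchange_big /= B2. Qed.
Lemma B3' x y : \sum_i \sum_j E x j j * E y i i = Uf x y.
Proof. by rewrite exchange_big /= B3. Qed.

Lemma sum_dl_diag (G : 'I_d -> 'I_d -> R) :
  \sum_i \sum_j dl i j * G i j = \sum_i G i i.
Proof. by apply: eq_bigr => i _; rewrite sum_dl. Qed.

Lemma sum2D (F G : 'I_d -> 'I_d -> R) :
  \sum_i \sum_j (F i j + G i j) = \sum_i \sum_j F i j + \sum_i \sum_j G i j.
Proof. by rewrite -big_split; apply: eq_bigr => i _; rewrite big_split. Qed.
Lemma sum2N (F : 'I_d -> 'I_d -> R) :
  \sum_i \sum_j (- F i j) = - \sum_i \sum_j F i j.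
Proof. by rewrite -sumrN; apply: eq_bigr => i _; rewrite sumrN. Qed.
Lemma sum2Z (a : R) (F : 'I_d -> 'I_d -> R) :
  \sum_i \sum_j (a * F i j) = a * \sum_i \sum_j F i j.
Proof. by rewrite mulr_sumr; apply: eq_bigr => i _; rewrite mulr_sumr. Qed.


Definition Vt := ('I_6 * 'I_d * 'I_d)%type.
Definition kind (r : Vt) : nat := r.1.1.
Definition fv (r : Vt) (l : 'I_d) : R := let i := r.1.2 in let j := r.2 in
  match kind r with 0 => dl l i | 1 => dl l i + dl l j | 2 => dl l i - dl l j | _ => 0 end.
Definition gv (r : Vt) (m : 'I_d) : R := let i := r.1.2 in let j := r.2 in
  match kind r with 0 => (1 - dl i j) * dl m j | 1 => dl m i - dl m j
  | 2 => dl m i + dl m j | _ => 0 end.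
Definition vv (r : Vt) (x : pidx d) : R := let i := r.1.2 in let j := r.2 in
  match kind r with 0 | 1 | 2 => fv r x.1 * gv r x.2
  | 3 => E x i i - E x j j | 4 => (1 - dl i j) * (E x i j + E x j i)
  | _ => dl i j * dl x.1 x.2 end.

Lemma sumVt (F : Vt -> R) : \sum_(r : Vt) F r = \sum_(k < 6) \sum_i \sum_j F (k, i, j).
Proof.
rewrite pair_big /= pair_big /=; apply: eq_bigr => -[[k i] j] _ //.
Qed.


Ltac dij i j := rewrite /dl; case: (eqVneq i j) => [?|?]; subst; rewrite ?eqxx /=; ring.

Section Sums.
Variables (x y : pidx d).

Lemma S0 : \sum_i \sum_j dl x.1 i * ((1 - dl i j) * dl x.2 j) *
        (dl y.1 i * ((1 - dl i j) * dl y.2 j)) = Idf x y - Dgf x y.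
Proof.
rewrite (eq_bigr (fun i => \sum_j (E x i j * E y i j + (-1) * (dl i j * (E x i i * E y i i))))); last first.
  by move=> i _; apply: eq_bigr => j _; rewrite /E; dij i j.
by rewrite sum2D sum2Z B1 sum_dl_diag B4; ring.
Qed.

Lemma S12 : \sum_i \sum_j (dl x.1 i + dl x.1 j) * (dl x.2 i - dl x.2 j) *
         ((dl y.1 i + dl y.1 j) * (dl y.2 i - dl y.2 j)) +
   \sum_i \sum_j (dl x.1 i - dl x.1 j) * (dl x.2 i + dl x.2 j) *
          ((dl y.1 i - dl y.1 j) * (dl y.2 i + dl y.2 j))
  = 4 * d%:R * Dgf x y - 4 * Uf x y + 4 * Idf x y - 4 * Swf x y.
Proof.
rewrite -sum2D (eq_bigr (fun i => \sum_j (
   2 * (E x i i * E y i i) + (-2) * (E x i i * E y j j) + (-2) * (E x j j * E y i i)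
 + 2 * (E x j j * E y j j) + 2 * (E x j i * E y j i) + (-2) * (E x j i * E y i j)
 + (-2) * (E x i j * E y j i) + 2 * (E x i j * E y i j)))); last first.
  by move=> i _; apply: eq_bigr => j _; rewrite /E; ring.
rewrite !sum2D !sum2Z B5 B3 B3' B5' B1' B2' B2 B1; ring.
Qed.

Lemma S3 : \sum_i \sum_j (E x i i - E x j j) * (E y i i - E y j j)
  = 2 * d%:R * Dgf x y - 2 * Uf x y.
Proof.
rewrite (eq_bigr (fun i => \sum_j (
   (E x i i * E y i i) + (-1) * (E x i i * E y j j) + (-1) * (E x j j * E y i i)
 + (E x j j * E y j j)))); last first.
  by move=> i _; apply: eq_bigr => j _; ring.
rewrite !sum2D !sum2Z B5 B3 B3' B5'; ring.
Qed.

Lemma S4 : \sum_i \sum_j (1 - dl i j) * (E x i j + E x j i) *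
            ((1 - dl i j) * (E y i j + E y j i))
  = 2 * Idf x y + 2 * Swf x y - 4 * Dgf x y.
Proof.
rewrite (eq_bigr (fun i => \sum_j (
   (E x i j * E y i j) + (E x i j * E y j i) + (E x j i * E y i j)
 + (E x j i * E y j i) + (-4) * (dl i j * (E x i i * E y i i))))); last first.
  by move=> i _; apply: eq_bigr => j _; rewrite /E; dij i j.
rewrite !sum2D !sum2Z B1 B2 B2' B1' sum_dl_diag B4; ring.
Qed.

Lemma S5 : \sum_i \sum_j dl i j * dl x.1 x.2 * (dl i j * dl y.1 y.2)
  = d%:R * Uf x y.
Proof.
rewrite (eq_bigr (fun i => \sum_j dl i j * Uf x y)); last first.
  by move=> i _; apply: eq_bigr => j _; rewrite /Uf; dij i j.
by rewrite sum_dl_diag sum_const_d.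
Qed.
End Sums.

Section Frame.
Variables (A B c eta : R).
Definition bet := (B + c) / 2.
Definition gg := (c - B) / 2.
Definition Wf (x y : pidx d) := bet * Idf x y + (A - c) * Dgf x y + gg * Uf x y.
Definition cf (r : Vt) : R := match kind r with
  | 0 => bet - 8 * eta | 1 => eta | 2 => eta
  | 3 => (A - c + bet - 4 * d%:R * eta) / (2 * d%:R) | 4 => 2 * eta
  | _ => (gg + (A - c + bet) / d%:R) / d%:R end.

Lemma frameE x y : (0 < d)%N ->
  \sum_(r : Vt) cf r * (vv r x * vv r y) = Wf x y.
Proof.
move=> d0.
rewrite sumVt !big_ord_recl big_ord0 addr0 /=.
rewrite /cf /vv /fv /gv /kind /=.
rewrite !sum2Z S0 S3 S4 S5.
set s1 := \sum_i \sum_j (dl x.1 i + _) * _ * _.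
set s2 := \sum_i \sum_j (dl x.1 i - _) * _ * _.
have e2 : s2 = 4 * d%:R * Dgf x y - 4 * Uf x y + 4 * Idf x y - 4 * Swf x y - s1.
  have h := S12 x y; rewrite -/s1 -/s2 in h; rewrite -h; ring.
rewrite e2 /Wf /bet /gg.
have dn0 : d%:R != 0 :> R by rewrite pnatr_eq0 -lt0n.
by field; rewrite dn0.
Qed.
End Frame.

Lemma rCE (x : R) : rC x = real_complex R x. Proof. by []. Qed.
Lemma rC_nat n : rC (n%:R : R) = (n%:R : C).
Proof. by rewrite rCE rmorph_nat. Qed.
Lemma rCM (a b : R) : rC (a * b) = rC a * rC b. Proof. by rewrite !rCE rmorphM. Qed.
Lemma rCD (a b : R) : rC (a + b) = rC a + rC b. Proof. by rewrite !rCE rmorphD. Qed.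
Lemma rCB (a b : R) : rC (a - b) = rC a - rC b. Proof. by rewrite !rCE rmorphB. Qed.
Lemma rC_sum (I : finType) (P : pred I) (F : I -> R) :
  rC (\sum_(i | P i) F i) = \sum_(i | P i) rC (F i).
Proof. by rewrite rCE rmorph_sum. Qed.
Lemma conj_rC (x : R) : (rC x)^* = rC x.
Proof. by rewrite /rC; apply/eqP; rewrite eq_complex /= oppr0 !eqxx. Qed.

Lemma ketE i j x : ket R i j x = rC (E x i j).
Proof.
case: x => x1 x2; rewrite /ket /E /dl /= xpair_eqE.
by case: (x1 == i); case: (x2 == j); rewrite /= ?mul0r ?mulr0 ?mulr1 ?rC_nat.
Qed.

Lemma sq2_lemma (a b : R) : (rC a / sqrtC 2) * (rC b / sqrtC 2)^* = rC (a * b / 2).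
Proof.
have s0 : 0 <= sqrtC (2 : C) by rewrite sqrtC_ge0 ler0n.
rewrite rmorphM /= fmorphV /= conj_rC (geC0_conj s0).
rewrite rCM rCM (_ : rC (2^-1) = 2^-1); last first.
  by rewrite rCE fmorphV /= rmorph_nat.
rewrite mulrACA -invfM -expr2 sqrtCK; ring.
Qed.

Definition Ar (c eps : R) : R := 1 / (2 * d%:R) - (d%:R - 1) / 2 * (c + eps).
Definition Br (eps : R) : R := 1 / (d%:R * (d%:R - 1)) + eps.

Definition rhof (c eps : R) (x y : pidx d) : R :=
  Ar c eps * Dgf x y + Br eps * (Idf x y - Swf x y) / 2
  + c * (Idf x y + Swf x y - 2 * Dgf x y) / 2.

Lemma rhoE c eps x y : rho d c eps x y = rC (rhof c eps x y).
Proof.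
rewrite /rho /proj.
have h1 : \sum_(i < d) ket R i i x * (ket R i i y)^* = rC (Dgf x y).
  rewrite -B4 rC_sum; apply: eq_bigr => i _; by rewrite !ketE conj_rC rCM.
have h2 : \sum_(i < d) \sum_(j < d | (i < j)%N) psiM R i j x * (psiM R i j y)^*
   = rC ((Idf x y - Swf x y) / 2).
  rewrite /psiM.
  under eq_bigr do under eq_bigr do rewrite !ketE -!rCB sq2_lemma.
  under eq_bigr do rewrite -rC_sum. rewrite -rC_sum.
  congr rC.
  set F := fun i j => (E x i j - E x j i) * (E y i j - E y j i) / 2.
  have Fs : forall i j : 'I_d, F i j = F j i by move=> i j; rewrite /F; ring.
  have := sum_lt_sym F Fs; rewrite /F => h.
  apply: (@mulIf _ 2); first by rewrite pnatr_eq0.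
  rewrite [LHS]mulr_natr h.
  rewrite (eq_bigr (fun i => \sum_j ((1/2) * (E x i j * E y i j) + (-1/2) * (E x i j * E y j i)
     + (-1/2) * (E x j i * E y i j) + (1/2) * (E x j i * E y j i)))); last first.
    by move=> i _; apply: eq_bigr => j _; field; try done.
  rewrite !sum2D !sum2Z B1 B2 B2' B1' big1; last by move=> i _; ring.
  field; try done.
have h3 : \sum_(i < d) \sum_(j < d | (i < j)%N) psiP R i j x * (psiP R i j y)^*
   = rC ((Idf x y + Swf x y - 2 * Dgf x y) / 2).
  rewrite /psiP.
  under eq_bigr do under eq_bigr do rewrite !ketE -!rCD sq2_lemma.
  under eq_bigr do rewrite -rC_sum. rewrite -rC_sum.
  congr rC.
  set F := fun i j => (E x i j + E x j i) * (E y i j + E y j i) / 2.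
  have Fs : forall i j : 'I_d, F i j = F j i by move=> i j; rewrite /F; ring.
  have := sum_lt_sym F Fs; rewrite /F => h.
  apply: (@mulIf _ 2); first by rewrite pnatr_eq0.
  rewrite [LHS]mulr_natr h.
  rewrite (eq_bigr (fun i => \sum_j ((1/2) * (E x i j * E y i j) + (1/2) * (E x i j * E y j i)
     + (1/2) * (E x j i * E y i j) + (1/2) * (E x j i * E y j i)))); last first.
    by move=> i _; apply: eq_bigr => j _; field; try done.
  rewrite !sum2D !sum2Z B1 B2 B2' B1'.
  rewrite (eq_bigr (fun i => 2 * (E x i i * E y i i))); last by move=> i _; field; try done.
  rewrite -mulr_sumr B4; field; try done.
rewrite h1 h2 h3 -!rCM -!rCD; congr rC.
by rewrite /rhof /Ar /Br !mulrA.
Qed.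

Ltac dsolvef := rewrite /dl; repeat match goal with p : pidx _ |- _ => case: p => ? ? end; rewrite /=; repeat (match goal with
 | H : ?a <> ?a |- _ => exfalso; exact (H erefl)
 | |- context[(?a == ?b)] => case: (@eqP _ a b) => [?|?]; subst
 end); rewrite /=; field; try done.

Lemma ptransE c eps (x y : pidx d) :
  ptrans (rho d c eps) x y = rC (Wf (Ar c eps) (Br eps) c x y).
Proof.
rewrite /ptrans rhoE; congr rC.
rewrite /rhof /Wf /bet /gg /Idf /Dgf /Uf /Swf; dsolvef.
Qed.

Definition Nn (z : C) : R := let: Complex a b := z in a ^+ 2 + b ^+ 2.
Lemma conjM_Nn (z : C) : z^* * z = rC (Nn z).
Proof.
case: z => a b; rewrite /Nn /rC /=; apply/eqP; rewrite eq_complex /=.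
apply/andP; split; apply/eqP; ring.
Qed.
Lemma Nn_ge0 z : 0 <= Nn z.
Proof. by case: z => a b; rewrite /Nn addr_ge0 ?sqr_ge0. Qed.

Section Expand.
Variable n : nat.
Local Notation T := (tidx d n).

Definition Pv (t : {ffun 'I_n -> Vt}) (a b : T) : R := \prod_k vv (t k) (a k, b k).
Definition zt (t : {ffun 'I_n -> Vt}) (psi : T -> T -> C) : C :=
  \sum_a \sum_b rC (Pv t a b) * psi a b.

Lemma expvalE (X : op2 R d) (cr : Vt -> R) (psi : T -> T -> C) :
  (forall x y, X x y = rC (\sum_(r : Vt) cr r * (vv r x * vv r y))) ->
  expval X psi = rC (\sum_(t : {ffun 'I_n -> Vt}) (\prod_k cr (t k)) * Nn (zt t psi)).
Proof.
move=> HX.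
have TP : forall a b a' b', tensor_pow X a b a' b' =
    \sum_(t : {ffun 'I_n -> Vt}) rC (\prod_k cr (t k)) * rC (Pv t a b) * rC (Pv t a' b').
  move=> a b a' b'; rewrite /tensor_pow.
  under eq_bigr do rewrite HX.
  rewrite -[\prod_k rC _](@rmorph_prod _ _ (real_complex R)) /=.
  rewrite bigA_distr_bigA /= -rCE rC_sum; apply: eq_bigr => t _.
  by rewrite -!rCM /Pv -!big_split /=; congr rC; apply: eq_bigr => k _; rewrite mulrA.
rewrite /expval rC_sum.
under eq_bigr do under eq_bigr do under eq_bigr do under eq_bigr do
  rewrite TP mulr_sumr mulr_suml.
under eq_bigr do under eq_bigr do under eq_bigr do rewrite exchange_big.
under eq_bigr do under eq_bigr do rewrite exchange_big.
under eq_bigr do rewrite exchange_big.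
rewrite exchange_big; apply: eq_bigr => t _.
rewrite rCM -conjM_Nn /zt rmorph_sum /= mulr_suml mulr_sumr; apply: eq_bigr => a _.
rewrite rmorph_sum /= mulr_suml mulr_sumr; apply: eq_bigr => b _.
rewrite mulr_sumr mulr_sumr; apply: eq_bigr => a' _.
rewrite mulr_sumr mulr_sumr; apply: eq_bigr => b' _.
rewrite rmorphM /= conj_rC; ring.
Qed.
End Expand.
End P2.

Set Implicit Arguments. Unset Strict Implicit.

Arguments dl {R d}. Arguments E {R d}. Arguments vv {R d}. Arguments fv {R d}.
Arguments gv {R d}. Arguments Nn {R}. Arguments zt {R d n}. Arguments Pv {R d n}.
Arguments kind {d}. Arguments sum_dl {R d}. Arguments sum2D {R d}. Arguments sum2N {R d}.
Arguments sum2Z {R d}. Arguments sum_const_d {R d}. Arguments sum_dl_diag {R d}.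
Arguments conjM_Nn {R}. Arguments Nn_ge0 {R}.

Section C1.
Variable (R : rcfType).
Local Notation C := R[i].
Definition re (z : C) : R := let: Complex a _ := z in a.
Definition im (z : C) : R := let: Complex _ b := z in b.
Lemma NnE (z : C) : Nn z = re z ^+ 2 + im z ^+ 2. Proof. by case: z. Qed.
Lemma reD (x y : C) : re (x + y) = re x + re y. Proof. by case: x; case: y. Qed.
Lemma imD (x y : C) : im (x + y) = im x + im y. Proof. by case: x; case: y. Qed.
Lemma re_sum (I : finType) (F : I -> C) : re (\sum_i F i) = \sum_i re (F i).
Proof. by apply: (big_morph re) => [x y|]; [rewrite reD|]. Qed.
Lemma im_sum (I : finType) (F : I -> C) : im (\sum_i F i) = \sum_i im (F i).
Proof. by apply: (big_morph im) => [x y|]; [rewrite imD|]. Qed.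

Lemma NnM (x y : C) : Nn (x * y) = Nn x * Nn y.
Proof. case: x => a b; case: y => c e; rewrite /Nn /=; ring. Qed.
Lemma Nn_par (x y : C) : Nn (x + y) + Nn (x - y) = 2 * Nn x + 2 * Nn y.
Proof. case: x => a b; case: y => c e; rewrite /Nn /=; ring. Qed.
Lemma NnD_le (x y : C) : Nn (x + y) <= 2 * Nn x + 2 * Nn y.
Proof. rewrite -Nn_par lerDl; exact: Nn_ge0. Qed.
Lemma Nn_rC (r : R) (z : C) : Nn (rC r * z) = r ^+ 2 * Nn z.
Proof. case: z => a b; rewrite /Nn /rC /=; ring. Qed.
Lemma Nn_eq0 (z : C) : Nn z = 0 -> z = 0.
Proof.
case: z => a b; rewrite /Nn => /eqP; rewrite paddr_eq0 ?sqr_ge0 // !sqrf_eq0.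
by case/andP => /eqP -> /eqP ->.
Qed.

Lemma sqr_sum (I : finType) (f : I -> R) : (\sum_i f i) ^+ 2 = \sum_i \sum_j f i * f j.
Proof. by rewrite expr2 mulr_suml; apply: eq_bigr => i _; rewrite mulr_sumr. Qed.

Lemma pw_cs (x1 y1 x2 y2 : C) :
  re (x1 * y1) * re (x2 * y2) + im (x1 * y1) * im (x2 * y2)
    <= (Nn x1 * Nn y2 + Nn x2 * Nn y1) / 2.
Proof.
case: x1 => p q; case: y1 => r s; case: x2 => p' q'; case: y2 => r' s'.
rewrite /Nn /=.
have h : (p ^+ 2 + q ^+ 2) * (r' ^+ 2 + s' ^+ 2) + (p' ^+ 2 + q' ^+ 2) * (r ^+ 2 + s ^+ 2)
   - 2 * ((p * r - q * s) * (p' * r' - q' * s') + (p * s + q * r) * (p' * s' + q' * r'))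
   = (p * r' + q * s' - p' * r - q' * s) ^+ 2 + (p * s' - q * r' - p' * s + q' * r) ^+ 2.
  ring.
have h2 : 0 <= (p * r' + q * s' - p' * r - q' * s) ^+ 2 + (p * s' - q * r' - p' * s + q' * r) ^+ 2.
  by rewrite addr_ge0 ?sqr_ge0.
rewrite -h in h2; lra.
Qed.

Lemma sum_avg (I : finType) (A : I -> I -> R) :
  \sum_i \sum_j (A i j + A j i) / 2 = \sum_i \sum_j A i j.
Proof.
rewrite (eq_bigr (fun i => (\sum_j A i j + \sum_j A j i) / 2)); last first.
  by move=> i _; rewrite -mulr_suml big_split.
rewrite -mulr_suml big_split /= [X in _ + X]exchange_big /=; field; done.
Qed.

Lemma CS (I : finType) (x y : I -> C) :
  Nn (\sum_i x i * y i) <= (\sum_i Nn (x i)) * (\sum_i Nn (y i)).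
Proof.
rewrite NnE re_sum im_sum !sqr_sum -big_split /=.
have -> : (\sum_i Nn (x i)) * (\sum_i Nn (y i)) =
   \sum_i \sum_j (Nn (x i) * Nn (y j) + Nn (x j) * Nn (y i)) / 2.
  rewrite sum_avg mulr_suml; apply: eq_bigr => i _; by rewrite mulr_sumr.
apply: ler_sum => i _; rewrite -big_split /=; apply: ler_sum => j _.
exact: pw_cs.
Qed.

End C1.

Section F.
Variable (X : finType).
Definition fcons m (x : X) (a : {ffun 'I_m -> X}) : {ffun 'I_m.+1 -> X} :=
  [ffun k => if unlift ord0 k is Some k' then a k' else x].
Definition ftail m (a : {ffun 'I_m.+1 -> X}) : {ffun 'I_m -> X} :=
  [ffun k => a (lift ord0 k)].
Lemma fcons0 m x (a : {ffun 'I_m -> X}) : fcons x a ord0 = x.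
Proof. by rewrite ffunE unlift_none. Qed.
Lemma fconsS m x (a : {ffun 'I_m -> X}) k : fcons x a (lift ord0 k) = a k.
Proof. by rewrite ffunE liftK. Qed.
Lemma fconsK m (a : {ffun 'I_m.+1 -> X}) : fcons (a ord0) (ftail a) = a.
Proof.
apply/ffunP => k; rewrite ffunE; case: unliftP => [j ->|->] //.
by rewrite ffunE.
Qed.
Lemma ftail_fcons m x (a : {ffun 'I_m -> X}) : ftail (fcons x a) = a.
Proof. by apply/ffunP => k; rewrite ffunE fconsS. Qed.

Lemma sum_ffunS (V : zmodType) m (F : {ffun 'I_m.+1 -> X} -> V) :
  \sum_a F a = \sum_x \sum_(a : {ffun 'I_m -> X}) F (fcons x a).
Proof.
rewrite pair_big /= [LHS](reindex (fun p : X * {ffun 'I_m -> X} => fcons p.1 p.2)) //=.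
exists (fun a : {ffun 'I_m.+1 -> X} => (a ord0, ftail a)) => [[x a] _|a _] /=.
  by rewrite fcons0 ftail_fcons.
by rewrite fconsK.
Qed.

Lemma ffun0_eq (a b : {ffun 'I_0 -> X}) : a = b.
Proof. by apply/ffunP => -[]. Qed.

Lemma sum_ffun0 (V : zmodType) (F : {ffun 'I_0 -> X} -> V) (a0 : {ffun 'I_0 -> X}) :
  \sum_a F a = F a0.
Proof.
rewrite (bigD1 a0) //= big1 ?addr0 // => a; by rewrite (ffun0_eq a a0) eqxx.
Qed.
End F.

Section V.
Variables (R : rcfType) (d : nat).
Local Notation C := R[i].

Lemma var_real (f : 'I_d -> R) :
  \sum_i \sum_j (f i - f j) ^+ 2 = 2 * d%:R * \sum_i f i ^+ 2 - 2 * (\sum_i f i) ^+ 2.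
Proof.
rewrite (eq_bigr (fun i => \sum_j (f i ^+ 2 + f j ^+ 2 + (-2) * (f i * f j)))); last first.
  by move=> i _; apply: eq_bigr => j _; ring.
rewrite !sum2D sum2Z sqr_sum.
rewrite (eq_bigr (fun i => d%:R * f i ^+ 2)); last by move=> i _; rewrite sum_const_d.
rewrite [X in _ + X + _](eq_bigr (fun i => \sum_j f j ^+ 2)) // sum_const_d -mulr_sumr.
ring.
Qed.

Lemma var_id (x : 'I_d -> C) :
  \sum_i \sum_j Nn (x i - x j) = 2 * d%:R * \sum_i Nn (x i) - 2 * Nn (\sum_i x i).
Proof.
have reB : forall a b : C, re (a - b) = re a - re b by move=> [a b] [c e].
have imB : forall a b : C, im (a - b) = im a - im b by move=> [a b] [c e].
rewrite (eq_bigr (fun i => \sum_j ((re (x i) - re (x j)) ^+ 2 + (im (x i) - im (x j)) ^+ 2))); last first.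
  by move=> i _; apply: eq_bigr => j _; rewrite NnE reB imB.
rewrite sum2D !var_real NnE re_sum im_sum.
rewrite [\sum_i Nn (x i)](eq_bigr (fun i => re (x i) ^+ 2 + im (x i) ^+ 2)); last by move=> i _; rewrite NnE.
rewrite big_split /=; ring.
Qed.
End V.

Set Implicit Arguments. Unset Strict Implicit.

Section K.
Variables (R : rcfType) (d : nat).
Local Notation C := R[i].
Local Notation Vt := (Vt d).
Local Notation T m := (tidx d m).
Local Notation Pv := (@Pv R d _).
Local Notation vv := (@vv R d).
Local Notation fv := (@fv R d).
Local Notation gv := (@gv R d).
Local Notation zt := (@zt R d _).
Local Notation dl := (@dl R d).

Definition slice m (r : Vt) (psi : T m.+1 -> T m.+1 -> C) : T m -> T m -> C :=
  fun a b => \sum_l \sum_mm rC (vv r (l, mm)) * psi (fcons l a) (fcons mm b).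

Lemma Pv_fcons m r (t : {ffun 'I_m -> Vt}) l mm (a b : T m) :
  Pv (fcons r t) (fcons l a) (fcons mm b) = vv r (l, mm) * Pv t a b.
Proof.
rewrite /Pv big_ord_recl !fcons0; congr (_ * _); apply: eq_bigr => k _.
by rewrite !fconsS.
Qed.

Lemma zt_fcons m r (t : {ffun 'I_m -> Vt}) (psi : T m.+1 -> T m.+1 -> C) :
  zt (fcons r t) psi = zt t (slice r psi).
Proof.
rewrite /zt sum_ffunS.
under eq_bigr do under eq_bigr do rewrite sum_ffunS.
under eq_bigr do under eq_bigr do under eq_bigr do under eq_bigr do rewrite Pv_fcons rCM.
rewrite exchange_big /=; apply: eq_bigr => a _.
under eq_bigr do rewrite exchange_big /=.
rewrite exchange_big /=; apply: eq_bigr => b _.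
rewrite /slice mulr_sumr; apply: eq_bigr => l _; rewrite mulr_sumr; apply: eq_bigr => mm _.
ring.
Qed.

Definition allpk m (t : {ffun 'I_m -> Vt}) : bool := [forall k, (kind (t k) < 3)%N].

Lemma allpk_fcons m r (t : {ffun 'I_m -> Vt}) :
  allpk (fcons r t) = (kind r < 3)%N && allpk t.
Proof.
apply/forallP/andP => [H|[H1 /forallP H2] k].
  split; first by have := H ord0; rewrite fcons0.
  by apply/forallP => k; have := H (lift ord0 k); rewrite fconsS.
by case: (unliftP ord0 k) => [j ->|->]; rewrite ?fconsS ?fcons0.
Qed.

Lemma sum_allpk m (F : {ffun 'I_m.+1 -> Vt} -> R) :
  \sum_(t | allpk t) F t =
  \sum_(r | (kind r < 3)%N) \sum_(t : {ffun 'I_m -> Vt} | allpk t) F (fcons r t).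
Proof.
rewrite big_mkcond sum_ffunS [RHS]big_mkcond; apply: eq_bigr => r _.
under eq_bigr do rewrite allpk_fcons.
case: (kind r < 3)%N => /=; first by rewrite [RHS]big_mkcond.
by rewrite big1_eq.
Qed.

Definition rep2 m (psi : T m -> T m -> C) :=
  exists u1 v1 u2 v2 : T m -> C, forall a b, psi a b = u1 a * v1 b + u2 a * v2 b.

Lemma vv_prod (r : Vt) x : (kind r < 3)%N -> vv r x = fv r x.1 * gv r x.2.
Proof.
case: r => [[[k Hk] i] j]; rewrite /vv /kind /=.
by case: k Hk => [|[|[|k]]].
Qed.

Lemma rep2_slice m r (psi : T m.+1 -> T m.+1 -> C) :
  (kind r < 3)%N -> rep2 psi -> rep2 (slice r psi).
Proof.
move=> hk [u1 [v1 [u2 [v2 H]]]].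
exists (fun a => \sum_l rC (fv r l) * u1 (fcons l a)),
       (fun b => \sum_mm rC (gv r mm) * v1 (fcons mm b)),
       (fun a => \sum_l rC (fv r l) * u2 (fcons l a)),
       (fun b => \sum_mm rC (gv r mm) * v2 (fcons mm b)).
move=> a b; rewrite /slice !mulr_suml -big_split /=; apply: eq_bigr => l _.
rewrite !mulr_sumr -big_split /=; apply: eq_bigr => mm _.
rewrite (vv_prod _ hk) H rCM /=; ring.
Qed.

Definition nrm m (psi : T m -> T m -> C) := \sum_a \sum_b Nn (psi a b).

Lemma nrm_ge0 m (psi : T m -> T m -> C) : 0 <= nrm psi.
Proof. by apply: sumr_ge0 => a _; apply: sumr_ge0 => b _; apply: Nn_ge0. Qed.

Definition nrm1 m (u : T m -> C) := \sum_a Nn (u a).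

Lemma rC_inj : injective (@rC R).
Proof. by move=> x y []. Qed.

Lemma sum_prodC (I J : finType) (f : I -> C) (g : J -> C) :
  \sum_a \sum_b f a * g b = (\sum_a f a) * (\sum_b g b).
Proof. by rewrite mulr_suml; apply: eq_bigr => a _; rewrite mulr_sumr. Qed.
Lemma sum_prodR (I J : finType) (f : I -> R) (g : J -> R) :
  \sum_a \sum_b f a * g b = (\sum_a f a) * (\sum_b g b).
Proof. by rewrite mulr_suml; apply: eq_bigr => a _; rewrite mulr_sumr. Qed.
Lemma sum2DC (I J : finType) (F G : I -> J -> C) :
  \sum_i \sum_j (F i j + G i j) = \sum_i \sum_j F i j + \sum_i \sum_j G i j.
Proof. by rewrite -big_split; apply: eq_bigr => i _; rewrite big_split. Qed.

Lemma GS m (psi : T m -> T m -> C) : rep2 psi ->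
  exists u1 v1 u2 v2 : T m -> C,
    (forall a b, psi a b = u1 a * v1 b + u2 a * v2 b) /\ \sum_b v1 b * (v2 b)^* = 0.
Proof.
case=> u1 [v1 [u2 [v2 H]]].
set S11 := \sum_b v1 b * (v1 b)^*.
set S21 := \sum_b v2 b * (v1 b)^*.
pose al := S21 / S11.
exists (fun a => u1 a + al * u2 a), v1, u2, (fun b => v2 b - al * v1 b); split.
  by move=> a b; rewrite H; ring.
have S11r : S11^* = S11.
  by rewrite /S11 rmorph_sum; apply: eq_bigr => b _; rewrite rmorphM /= conjCK mulrC.
rewrite /=.
have -> : \sum_b v1 b * (v2 b - al * v1 b)^* = S21^* - al^* * S11.
  rewrite /S21 rmorph_sum /S11 mulr_sumr -sumrB; apply: eq_bigr => b _.
  rewrite rmorphB /= !rmorphM /= conjCK; ring.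
have [S0|Sn0] := eqVneq S11 0.
  have v10 : forall b, v1 b = 0.
    have e : S11 = rC (\sum_b Nn (v1 b)).
      by rewrite rC_sum; apply: eq_bigr => b _; rewrite -conjM_Nn mulrC.
    have e0 : \sum_b Nn (v1 b) = 0 by apply: rC_inj; rewrite -e S0.
    move=> b; apply: Nn_eq0.
    exact: (psumr_eq0P (fun i _ => Nn_ge0 (v1 i)) e0).
  rewrite S0 mulr0 subr0 /S21 rmorph_sum big1 // => b _.
  by rewrite v10 /= !(rmorph0, mulr0).
by rewrite /al rmorphM /= fmorphV /= S11r divfK // subrr.
Qed.

Lemma nrm_orth m (u1 v1 u2 v2 : T m -> C) : \sum_b v1 b * (v2 b)^* = 0 ->
  nrm (fun a b => u1 a * v1 b + u2 a * v2 b) = nrm1 u1 * nrm1 v1 + nrm1 u2 * nrm1 v2.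
Proof.
move=> O.
have O1 : \sum_b (v1 b)^* * v2 b = 0.
  transitivity ((\sum_b v1 b * (v2 b)^*)^*); last by rewrite O rmorph0.
  rewrite rmorph_sum /=; apply: eq_bigr => b _; by rewrite rmorphM /= conjCK mulrC.
have O2 : \sum_b (v2 b)^* * v1 b = 0.
  by rewrite -[RHS]O; apply: eq_bigr => b _; rewrite mulrC.
apply: rC_inj; rewrite rCD !rCM /nrm /nrm1 !rC_sum.
under eq_bigr do rewrite rC_sum.
under eq_bigr do under eq_bigr do rewrite -conjM_Nn.
under [X in _ = X * _ + _]eq_bigr do rewrite -conjM_Nn.
under [X in _ = _ * X + _]eq_bigr do rewrite -conjM_Nn.
under [X in _ = _ + X * _]eq_bigr do rewrite -conjM_Nn.
under [X in _ = _ + _ * X]eq_bigr do rewrite -conjM_Nn.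
rewrite (eq_bigr (fun a => \sum_b (((u1 a)^* * u1 a) * ((v1 b)^* * v1 b)
   + ((u2 a)^* * u2 a) * ((v2 b)^* * v2 b) + ((u1 a)^* * u2 a) * ((v1 b)^* * v2 b)
   + ((u2 a)^* * u1 a) * ((v2 b)^* * v1 b)))); last first.
  by move=> a _; apply: eq_bigr => b _; rewrite rmorphD !rmorphM /=; ring.
rewrite !sum2DC !sum_prodC O1 O2 !mulr0 !addr0.
done.
Qed.

Lemma nrm1_split m (u : T m.+1 -> C) :
  nrm1 u = \sum_a \sum_i Nn (u (fcons i a)).
Proof. by rewrite /nrm1 sum_ffunS exchange_big. Qed.

Lemma TB m (psi : T m.+1 -> T m.+1 -> C) : rep2 psi ->
  nrm (fun a b => \sum_i psi (fcons i a) (fcons i b)) <= 2 * nrm psi.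
Proof.
move/GS => [u1 [v1 [u2 [v2 [H O]]]]].
have -> : nrm psi = nrm1 u1 * nrm1 v1 + nrm1 u2 * nrm1 v2.
  rewrite -(nrm_orth u1 u2 O) /nrm; apply: eq_bigr => a _; apply: eq_bigr => b _.
  by rewrite H.
rewrite !nrm1_split -!sum_prodR mulrDr !mulr_sumr -big_split /=.
apply: ler_sum => a _; rewrite !mulr_sumr -big_split /=; apply: ler_sum => b _.
under eq_bigr do rewrite H.
rewrite big_split /=; apply: le_trans (NnD_le _ _) _.
by apply: lerD; apply: ler_wpM2l => //; apply: CS.
Qed.

Lemma sdl (i : 'I_d) (H : 'I_d -> C) : \sum_l rC (dl l i) * H l = H i.
Proof.
rewrite (bigD1 i) //= /dl eqxx (_ : rC 1 = 1) // mul1r big1 ?addr0 // => l /negbTE ->.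
by rewrite (_ : rC 0 = 0) // mul0r.
Qed.
Lemma sdlp (i j : 'I_d) (H : 'I_d -> C) : \sum_l rC (dl l i + dl l j) * H l = H i + H j.
Proof. by rewrite -sdl -(sdl j) -big_split; apply: eq_bigr => l _; rewrite rCD mulrDl. Qed.
Lemma sdlm (i j : 'I_d) (H : 'I_d -> C) : \sum_l rC (dl l i - dl l j) * H l = H i - H j.
Proof. by rewrite -sdl -(sdl j) -sumrB; apply: eq_bigr => l _; rewrite rCB mulrBl. Qed.

Lemma slice_prod m r (psi : T m.+1 -> T m.+1 -> C) a b : (kind r < 3)%N ->
  slice r psi a b = \sum_l rC (fv r l) * \sum_mm rC (gv r mm) * psi (fcons l a) (fcons mm b).
Proof.
move=> hk; rewrite /slice; apply: eq_bigr => l _; rewrite mulr_sumr; apply: eq_bigr => mm _.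
by rewrite vv_prod // rCM /=; ring.
Qed.

Local Notation k0 := (@ord0 5).
Local Notation k1 := (lift (@ord0 5) (@ord0 4)).
Local Notation k2 := (lift (@ord0 5) (lift (@ord0 4) (@ord0 3))).

Lemma sumVt3 (G : Vt -> R) : \sum_(r | (kind r < 3)%N) G r =
  \sum_i \sum_j (G (k0, i, j) + G (k1, i, j) + G (k2, i, j)).
Proof.
rewrite big_mkcond sumVt !big_ord_recl big_ord0 /= !big1_eq !addr0.
by rewrite !sum2D addrA.
Qed.

Section BLs.
Variables (m : nat) (psi : T m.+1 -> T m.+1 -> C).
Local Notation M i j := (fun a b => psi (fcons i a) (fcons j b)).

Lemma slice0 i j a b : slice (k0, i, j) psi a b = rC (1 - dl i j) * M i j a b.
Proof.
rewrite slice_prod //= /fv /gv /=; rewrite sdl.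
by under eq_bigr do rewrite rCM -mulrA; rewrite -mulr_sumr sdl.
Qed.

Lemma slice1 i j a b : slice (k1, i, j) psi a b =
  (M i i a b - M j j a b) + (M j i a b - M i j a b).
Proof.
rewrite slice_prod //= /fv /gv /=; rewrite sdlp !sdlm; ring.
Qed.

Lemma slice2 i j a b : slice (k2, i, j) psi a b =
  (M i i a b - M j j a b) - (M j i a b - M i j a b).
Proof.
rewrite slice_prod //= /fv /gv /=; rewrite sdlm !sdlp; ring.
Qed.

Lemma exch4 (I J K L : finType) (F : I -> J -> K -> L -> R) :
  \sum_i \sum_j \sum_k \sum_l F i j k l = \sum_k \sum_l \sum_i \sum_j F i j k l.
Proof.
under eq_bigr do rewrite exchange_big /=.
rewrite exchange_big /=; apply: eq_bigr => k _.
under eq_bigr do rewrite exchange_big /=.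
by rewrite exchange_big.
Qed.

Lemma nrmM : nrm psi = \sum_i \sum_j nrm (M i j).
Proof.
rewrite /nrm sum_ffunS; apply: eq_bigr => i _.
under eq_bigr do rewrite sum_ffunS.
by rewrite exchange_big.
Qed.

Lemma dl01 (i j : 'I_d) : (1 - dl i j) ^+ 2 = 1 - dl i j.
Proof. by rewrite /dl; case: (i == j); rewrite /= ?subrr ?subr0 ?expr0n ?expr1n. Qed.

Lemma BL : (3 <= d)%N -> rep2 psi ->
  1 / 3 * nrm psi <= \sum_(r | (kind r < 3)%N) nrm (slice r psi).
Proof.
move=> d3 hr.
set D := \sum_i \sum_j (1 - dl i j) * nrm (M i j).
set S := \sum_i nrm (M i i).
set Ep := \sum_i \sum_j nrm (fun a b => M i i a b - M j j a b).
set Tn := nrm (fun a b => \sum_i M i i a b).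
have hP : nrm psi = D + S.
  rewrite nrmM /D /S -(sum_dl_diag (fun i j => nrm (M i j))) -sum2D.
  by apply: eq_bigr => i _; apply: eq_bigr => j _; ring.
have hE : Ep = 2 * (d%:R * S) - 2 * Tn.
  rewrite /Ep /nrm exch4.
  under eq_bigr do under eq_bigr do rewrite (var_id (fun i => M i i _ _)).
  rewrite /Tn /S /nrm.
  under eq_bigr do rewrite sumrB -!mulr_sumr.
  rewrite sumrB -!mulr_sumr -mulrA; congr (_ * _ - _); congr (_ * _).
  under eq_bigr do rewrite exchange_big /=.
  by rewrite exchange_big.
have hT : Tn <= 2 * nrm psi by apply: TB.
have hD : 0 <= D.
  apply: sumr_ge0 => i _; apply: sumr_ge0 => j _; apply: mulr_ge0; last exact: nrm_ge0.
  by rewrite /dl; case: (i == j); rewrite ?subrr ?subr0.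
have hS : 0 <= S by apply: sumr_ge0 => i _; exact: nrm_ge0.
have hEp : 0 <= Ep by apply: sumr_ge0 => i _; apply: sumr_ge0 => j _; exact: nrm_ge0.
have hdS : 3 * S <= d%:R * S.
  by apply: ler_wpM2r => //; rewrite (ler_nat R 3 d).
have low : D + 2 * Ep <= \sum_(r | (kind r < 3)%N) nrm (slice r psi).
  rewrite sumVt3 /D /Ep -sum2Z -sum2D.
  apply: ler_sum => i _; apply: ler_sum => j _.
  have e0 : nrm (slice (k0, i, j) psi) = (1 - dl i j) * nrm (M i j).
    rewrite /nrm mulr_sumr; apply: eq_bigr => a _; rewrite mulr_sumr; apply: eq_bigr => b _.
    by rewrite slice0 Nn_rC dl01.
  have e12 : nrm (slice (k1, i, j) psi) + nrm (slice (k2, i, j) psi) =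
     2 * nrm (fun a b => M i i a b - M j j a b) + 2 * nrm (fun a b => M j i a b - M i j a b).
    rewrite /nrm -big_split !mulr_sumr -big_split; apply: eq_bigr => a _ /=.
    rewrite -big_split !mulr_sumr -big_split; apply: eq_bigr => b _ /=.
    by rewrite slice1 slice2 Nn_par.
  rewrite e0 -addrA e12 lerD2l lerDl mulr_ge0 //; exact: nrm_ge0.
apply: le_trans low; rewrite hP; rewrite hP in hT.
lra.
Qed.
End BLs.
Lemma KL m (psi : T m -> T m -> C) : (3 <= d)%N -> rep2 psi ->
  (1 / 3) ^+ m * nrm psi <= \sum_(t : {ffun 'I_m -> Vt} | allpk t) Nn (zt t psi).
Proof.
move=> d3; elim: m psi => [|m IH] psi hr.
  pose a0 : T 0 := ffun0 (card_ord 0).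
  pose t0 : {ffun 'I_0 -> Vt} := ffun0 (card_ord 0).
  rewrite expr0 mul1r /nrm (sum_ffun0 _ a0) (sum_ffun0 _ a0).
  rewrite big_mkcond (sum_ffun0 _ t0).
  have -> : allpk t0 by apply/forallP => -[].
  rewrite /zt (sum_ffun0 _ a0) (sum_ffun0 _ a0) /Pv big_ord0.
  by rewrite (_ : rC 1 = 1) ?mul1r.
rewrite sum_allpk.
under eq_bigr do under eq_bigr do rewrite zt_fcons.
apply: le_trans (ler_sum _ (fun r h => IH _ (rep2_slice h hr))).
rewrite -mulr_sumr exprSr -mulrA; apply: ler_wpM2l.
  by rewrite exprn_ge0 // divr_ge0.
exact: BL.
Qed.
End K.

Set Implicit Arguments. Unset Strict Implicit.

Section M.
Variables (R : rcfType) (d : nat).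
Local Notation C := R[i].
Local Notation T m := (tidx d m).

Lemma rank2_rep2 m (psi : T m -> T m -> C) : schmidt_rank psi = 2%N -> rep2 psi.
Proof.
rewrite /schmidt_rank.
set A := \matrix_(i < #|T m|, j < #|T m|) psi (enum_val i) (enum_val j).
move=> Hr.
have h := mulmx_base A.
move: (col_base A) (row_base A) h; rewrite Hr => cb rb h.
exists (fun a => cb (enum_rank a) ord0), (fun b => rb ord0 (enum_rank b)),
       (fun a => cb (enum_rank a) (lift ord0 ord0)), (fun b => rb (lift ord0 ord0) (enum_rank b)).
move=> a b.
move/matrixP: h => h.
have := h (enum_rank a) (enum_rank b).
rewrite /A !mxE !enum_rankK => <-.
by rewrite big_ord_recl big_ord_recl big_ord0 addr0.
Qed.

Local Notation Vt := (Vt d).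
Local Notation CF A B c eta := (cf R d A B c eta).

Lemma Nn_rC1 (x : R) : Nn (rC x) = x ^+ 2.
Proof. by rewrite /Nn /rC /= expr0n /= addr0. Qed.

Lemma zt_bound n (t : {ffun 'I_n -> Vt}) (psi : T n -> T n -> C) :
  Nn (zt t psi) <= (\sum_a \sum_b (Pv t a b) ^+ 2) * nrm psi.
Proof.
rewrite /zt /nrm !pair_big /=.
apply: le_trans (CS _ _) _.
rewrite le_eqVlt; apply/orP; left; apply/eqP; congr (_ * _); apply: eq_bigr => p _; exact: Nn_rC1.
Qed.

Lemma prod_lb n (F G : 'I_n -> R) (eps : R) :
  0 <= eps ->
  (forall k, -1 <= F k <= 1) ->
  (forall k, G k = F k \/ (G k = 0 /\ - eps <= F k <= 0)) ->
  \prod_k G k - eps <= \prod_k F k.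
Proof.
move=> e0 hF hG.
case: (boolP [exists k, G k != F k]) => [/existsP[k0 hk0]|].
  have [Gk0 Fk0] : G k0 = 0 /\ - eps <= F k0 <= 0.
    by case: (hG k0) => // e; rewrite e eqxx in hk0.
  rewrite (bigD1 k0) //= Gk0 mul0r sub0r.
  have h1 : `|\prod_k F k| <= `|F k0|.
    rewrite (bigD1 k0) //= normrM -[X in _ <= X]mulr1 ler_wpM2l //.
    rewrite normr_prod; apply: prodr_ile1 => k _; rewrite normr_ge0 /=.
    by rewrite ler_norml.
  have h2 : `|F k0| <= eps by rewrite ler_norml; case/andP: Fk0 => a b; lra.
  have h3 := ler_normr (\prod_k F k).
  rewrite lerNl; apply: le_trans h2; apply: le_trans h1.
  by rewrite -normrN ler_norm.
rewrite negb_exists => /forallP hk.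
rewrite (eq_bigr F); first by lra.
by move=> k _; move/negPn/eqP: (hk k).
Qed.
End M.

Unset Implicit Arguments.
Set Strict Implicit.

Theorem mainTheorem10 (R : rcfType) (d n : nat) (c : R) :
  (3 <= d)%N -> (1 <= n)%N ->
  0 <= c -> c < 1 / (d%:R * (d%:R - 1)) ->
  exists eps0 : R, 0 < eps0 /\
    forall eps : R, 0 <= eps -> eps <= eps0 ->
      c + eps <= 1 / (d%:R * (d%:R - 1)) ->
      forall psi : tidx d n -> tidx d n -> R[i],
        schmidt_rank psi = 2%N ->
        0 <= expval (ptrans (rho d c eps)) psi.
Proof.
move=> d3 n1 c0 ct.
set D : R := d%:R in ct *.
have D3 : 3 <= D by rewrite /D (ler_nat R 3 d).
have Dn0 : D != 0 by apply: lt0r_neq0; lra.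
have D1n0 : D - 1 != 0 by apply: lt0r_neq0; lra.
set t0 := 1 / (D * (D - 1)) in ct *.
have t0e : t0 * (D * (D - 1)) = 1 by rewrite /t0 mul1r mulVf // mulf_neq0.
have DD : 6 <= D * (D - 1) by nra.
have t0p : 0 < t0 by rewrite /t0 divr_gt0 //; nra.
have t0le : t0 <= 1 / 6.
  have : t0 * 6 <= t0 * (D * (D - 1)) by apply: ler_wpM2l; lra.
  rewrite t0e; lra.
set del := t0 - c.
have del0 : 0 < del by rewrite /del; lra.
have delt : del <= t0 by rewrite /del; lra.
pose eta := del / 18.
have etae : eta = del / 18 by [].
clearbody eta.
have eta0 : 0 < eta by lra.
pose L : R := \sum_(t : {ffun 'I_n -> Vt d}) \sum_a \sum_b (Pv t a b) ^+ 2.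
have L0 : 0 <= L by do 3 (apply: sumr_ge0 => ? _); apply: sqr_ge0.
pose K := (eta / 3) ^+ n.
have K0 : 0 < K by apply: exprn_gt0; lra.
have K1 : K <= 1 by apply: exprn_ile1; lra.
pose eps0 := del / 2 * (K / (L + 1)).
have KL1 : K / (L + 1) <= 1 by rewrite ler_pdivrMr; lra.
have KL0 : 0 < K / (L + 1) by apply: divr_gt0; lra.
exists eps0; split; first by rewrite /eps0; apply: mulr_gt0; lra.
move=> eps e0 ee0 ceps psi hrank.
have hr := rank2_rep2 hrank.
have ed : eps <= del / 2.
  apply: le_trans ee0 _; rewrite /eps0 -[X in _ <= X]mulr1; apply: ler_wpM2l; lra.
have e1 : eps <= 1 by lra.
have eK : eps <= K / (L + 1).
  apply: le_trans ee0 _; rewrite /eps0 -[X in _ <= X]mul1r; apply: ler_wpM2r; lra.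
have eL : eps * L <= K.
  have : eps * (L + 1) <= K by rewrite -ler_pdivlMr; lra.
  rewrite mulrDr mulr1; lra.
have Bre : Br R d eps = t0 + eps by rewrite /Br -/D -/t0.
have ge : Ar R d c eps - c + (Br R d eps + c) / 2 = (D * del - (D - 2) * eps) / 2.
  rewrite /Ar /Br -/D -/t0 /del /t0; field.
  by rewrite Dn0 D1n0.
have c5e : ((c - Br R d eps) / 2 + (Ar R d c eps - c + (Br R d eps + c) / 2) / D) / D
     = - (eps * ((D - 1) / (D * D))).
  rewrite ge Bre /del /t0; field.
  by rewrite Dn0 D1n0.
have q1 : (D - 1) / (D * D) <= 1 by rewrite ler_pdivrMr; nra.
have q0 : 0 <= (D - 1) / (D * D) by apply: divr_ge0; nra.
have Deta : D * eta = D * del / 18 by rewrite etae; ring.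
have Dde : (D - 2) * eps <= (D - 2) * (del / 2) by apply: ler_wpM2l; lra.
have Ddel : D * del <= D * (1 / 6) by apply: ler_wpM2l; lra.
have Ddel0 : 0 <= D * del by apply: mulr_ge0; lra.
pose CF := cf R d (Ar R d c eps) (Br R d eps) c eta.
have cfb : forall r : Vt d, [/\ (kind r != 5)%N -> 0 <= CF r <= 1,
     (kind r < 3)%N -> eta <= CF r & (kind r == 5)%N -> - eps <= CF r <= 0].
  case=> [[[k Hk] i] j]; rewrite /CF /cf /kind /bet /gg /=.
  case: k Hk => [|[|[|[|[|[|k]]]]]] Hk //=; rewrite -/D.
  - rewrite Bre; split => // _; try (apply/andP; split); lra.
  - split => // _; try (apply/andP; split); lra.
  - split => // _; try (apply/andP; split); lra.
  - rewrite ge; split => // _; apply/andP; split.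
      apply: divr_ge0; nra.
    rewrite ler_pdivrMr; nra.
  - split => // _; try (apply/andP; split); lra.
  - rewrite c5e; split => // _; apply/andP; split.
      rewrite lerN2 -[X in _ <= X]mulr1; apply: ler_wpM2l; lra.
    rewrite oppr_le0; apply: mulr_ge0; lra.
rewrite (@expvalE R d n _ CF psi); last first.
  move=> x y; rewrite ptransE /CF frameE //.
  by apply: leq_trans d3.
rewrite rCE ler0c.
pose cfp (r : Vt d) := if (kind r == 5)%N then 0 else CF r.
have cfp0 : forall r, 0 <= cfp r.
  move=> r; rewrite /cfp; case: ifP => // h.
  by case: (cfb r) => [h1 _ _]; case/andP: (h1 (negbT h)).
have low1 : forall t : {ffun 'I_n -> Vt d},
    \prod_k cfp (t k) - eps <= \prod_k CF (t k).
  move=> t; apply: prod_lb => // k.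
    case: (cfb (t k)) => h1 _ h3; case: (boolP (kind (t k) == 5)%N) => h.
      by case/andP: (h3 h) => u v; apply/andP; split; lra.
    by case/andP: (h1 h) => u v; apply/andP; split; lra.
  rewrite /cfp; case: ifP => h; [right | by left].
  by split => //; case: (cfb (t k)) => _ _ h3; apply: h3.
have lowpk : forall t : {ffun 'I_n -> Vt d}, allpk t -> eta ^+ n <= \prod_k cfp (t k).
  move=> t /forallP h.
  have -> : eta ^+ n = \prod_(k < n) eta by rewrite prodr_const card_ord.
  apply: ler_prod => k _; apply/andP; split; first lra.
  have hk := h k; rewrite /cfp ifF; last by apply/negbTE; move: hk; case: (kind (t k)) => [|[|[|]]].
  by case: (cfb (t k)) => _ h2 _; apply: h2.
set Nm := nrm psi.
have Nm0 : 0 <= Nm by apply: nrm_ge0.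
set X1 := \sum_(t : {ffun 'I_n -> Vt d}) \prod_(k < n) cfp (t k) * Nn (zt t psi).
set X2 := \sum_(t : {ffun 'I_n -> Vt d}) Nn (zt t psi).
have f1 : X1 - eps * X2 <= \sum_(t : {ffun 'I_n -> Vt d}) \prod_(k < n) CF (t k) * Nn (zt t psi).
  rewrite /X1 /X2 mulr_sumr -sumrB; apply: ler_sum => t _.
  rewrite -mulrBl; apply: ler_wpM2r; [exact: Nn_ge0 | exact: low1].
have f2 : K * Nm <= X1.
  have kl := KL d3 hr.
  apply: le_trans (_ : eta ^+ n * \sum_(t | allpk t) Nn (zt t psi) <= X1).
    rewrite /K expr_div_n -mulrA; apply: ler_wpM2l; first by apply: exprn_ge0; lra.
    by move: kl; rewrite expr_div_n expr1n div1r.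
  rewrite mulr_sumr /X1 [X in _ <= X](bigID (fun t => allpk t)) /= -[X in X <= _]addr0.
  apply: lerD; last by apply: sumr_ge0 => t _; apply: mulr_ge0; [apply: prodr_ge0 | exact: Nn_ge0].
  by apply: ler_sum => t ht; apply: ler_wpM2r; [exact: Nn_ge0 | exact: lowpk].
have f3 : X2 <= L * Nm.
  rewrite /X2 /L mulr_suml; apply: ler_sum => t _; exact: zt_bound.
have f4 : eps * X2 <= eps * (L * Nm) by apply: ler_wpM2l.
have f5 : eps * (L * Nm) <= K * Nm by rewrite mulrA; apply: ler_wpM2r.
lra.
Qed.
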